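(* Let $\mathcal{A}=\{A_1,\dots,A_m\}$ be a bimodal collection of pairwise disjoint nonempty subsets of a finite abelian group $G$, with internal difference groups $H_1,\dots,H_m$, such that $|A_1|<|H_1|$ and $|A_i|=|H_i|$ for all $2\le i\le m$. Then: (1) for all $2\le i\le m$, $A_i$ is a coset of $H_i$ and $H_i$ is a subgroup of $H_1$; (2) $A_1$ is a proper subset of a coset of $H_1$ and is a union of cosets of the subgroup $D=H_2+H_3+\dots+H_m$.
   Context: $G$ is written additively. The internal difference group $H_i$ of $A_i$ is the subgroup generated by all $x-y$ with $x,y\in A_i$; $A_i$ lies in a single coset of $H_i$ and $|A_i|\le|H_i|$. A collection $\{A_1,\dots,A_m\}$ of pairwise disjoint subsets of $G$ is bimodal if for every $i$ and every $\delta\in G\setminus\{0\}$, the number $N_i(\delta)$ of pairs $(a,b)$ with $a\in A_i$, $b\in A_j$ for some $j\neq i$, and $a-b=\delta$, satisfies $N_i(\delta)\in\{0,|A_i|\}$. An empty sum of subgroups is $\{0\}$. *)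

(* Defs.v *)
From HB Require Import structures.
From mathcomp Require Import all_boot all_order all_algebra all_fingroup.
Set Implicit Arguments. Unset Strict Implicit. Unset Printing Implicit Defensive.
Import GRing.Theory.
Local Open Scope ring_scope.

(* G is a finite abelian group written additively: V : finZmodType.
   Its canonical finGroupType structure (finalg) has group law +, so
   {group V} are exactly the additive subgroups and <<S>> is the
   subgroup generated by S. *)

Definition diff_group (V : finZmodType) (A : {set V}) : {set V} :=
  <<[set x - y | x in A, y in A]>>%g.

Definition add_coset (V : finZmodType) (x : V) (H : {set V}) : {set V} :=
  [set x + h | h in H].

Definition is_coset_of (V : finZmodType) (A H : {set V}) : Prop :=
  exists x : V, A = add_coset x H.

Definition union_of_cosets (V : finZmodType) (A H : {set V}) : Prop :=
  exists S : {set V}, A = \bigcup_(x in S) add_coset x H.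

Definition Ncount (V : finZmodType) (m : nat) (A : 'I_m -> {set V})
    (i : 'I_m) (delta : V) : nat :=
  #|[set p : V * V | [&& p.1 \in A i,
                        [exists j : 'I_m, (j != i) && (p.2 \in A j)] &
                        p.1 - p.2 == delta]]|.

Definition bimodal (V : finZmodType) (m : nat) (A : 'I_m -> {set V}) : Prop :=
  forall (i : 'I_m) (delta : V), delta != 0 ->
    Ncount A i delta = 0%N \/ Ncount A i delta = #|A i|.

(* Main.v *)
Require Import Defs.
From HB Require Import structures.
From mathcomp Require Import all_boot all_order all_algebra all_fingroup.
Import GRing.Theory FinRing.Theory.
Local Open Scope ring_scope.

Lemma card_add_coset (V : finZmodType) (a : V) (H : {set V}) :
  #|add_coset a H| = #|H|.
Proof. by rewrite /add_coset card_imset //; apply: addrI. Qed.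

Lemma diff_mem (V : finZmodType) (A : {set V}) x y :
  x \in A -> y \in A -> x - y \in diff_group A.
Proof.
by move=> xA yA; rewrite /diff_group; apply: mem_gen;
  apply: (imset2_f (fun x y => x - y)).
Qed.

Lemma coset_sub (V : finZmodType) (A : {set V}) a :
  a \in A -> A \subset add_coset a (diff_group A).
Proof.
move=> aA; apply/subsetP=> x xA; apply/imsetP; exists (x - a).
  exact: diff_mem.
by rewrite addrC subrK.
Qed.

Lemma coset_eq (V : finZmodType) (A : {set V}) a :
  a \in A -> #|A| = #|diff_group A| -> A = add_coset a (diff_group A).
Proof.
move=> aA hc; apply/eqP; rewrite eqEcard coset_sub //= card_add_coset hc //.
Qed.

Lemma add_coset_mem (V : finZmodType) a (H : {set V}) h :
  h \in H -> a + h \in add_coset a H.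
Proof. by move=> hH; apply: imset_f. Qed.

Lemma gen_stab (V : finZmodType) (A S : {set V}) :
  (forall s, s \in S -> forall x, x \in A -> x + s \in A) ->
  forall d, d \in <<S>>%g -> forall x, x \in A -> x + d \in A.
Proof.
move=> hS.
have gs : group_set [set d : V | [forall x in A, x + d \in A]].
  apply/group_setP; split.
    by rewrite inE; apply/forall_inP=> x xA; rewrite zmod1gE addr0.
  move=> u v; rewrite !inE => /forall_inP hu /forall_inP hv.
  by apply/forall_inP=> x xA; rewrite zmodMgE addrA; apply: hv; apply: hu.
have sub : (<<S>> \subset Group gs)%g.
  rewrite gen_subG; apply/subsetP=> s sS; rewrite inE.
  by apply/forall_inP=> x xA; apply: hS.
move=> d /(subsetP sub); rewrite inE => /forall_inP h x xA; exact: h.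
Qed.

Lemma same_idx (V : finZmodType) n (A : 'I_n -> {set V})
  (Hdisj : forall i j, i != j -> [disjoint A i & A j]) i j v :
  v \in A i -> v \in A j -> i = j.
Proof.
move=> vi vj; case: (eqVneq i j) => // /Hdisj hd.
by rewrite (disjointFr hd vi) in vj.
Qed.

Lemma key (V : finZmodType) n (A : 'I_n -> {set V})
  (Hbim : bimodal A) i d :
  d != 0 -> (exists a j, [/\ a \in A i, j != i & a - d \in A j]) ->
  forall a, a \in A i -> exists j, j != i /\ a - d \in A j.
Proof.
move=> dn0 [a0 [j0 [a0i j0i a0j]]].
set S := [set p : V * V | [&& p.1 \in A i,
                        [exists j : 'I_n, (j != i) && (p.2 \in A j)] &
                        p.1 - p.2 == d]].
have hN : Ncount A i d = #|S| by [].
have pS : (a0, a0 - d) \in S.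
  rewrite inE /= a0i subKr eqxx andbT /=.
  by apply/existsP; exists j0; rewrite j0i.
have cS : #|S| = #|A i|.
  case: (Hbim i d dn0); rewrite hN // => c0.
  by move: (card0_eq c0 (a0, a0 - d)); rewrite pS.
have img : [set p.1 | p in S] = A i.
  apply/eqP; rewrite eqEcard; apply/andP; split.
    by apply/subsetP=> x /imsetP [p]; rewrite inE => /and3P [h _ _] ->.
  rewrite card_in_imset ?cS //.
  move=> [p1 p2] [q1 q2]; rewrite !inE /= => /and3P [_ _ /eqP hp]
    /and3P [_ _ /eqP hq] e; subst q1.
  have e1 : p2 = p1 - d by rewrite -hp subKr.
  have e2 : q2 = p1 - d by rewrite -hq subKr.
  by rewrite e1 e2.
move=> a; rewrite -img => /imsetP [[p1 p2]]; rewrite inE /=.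
move=> /and3P [_ /existsP [j /andP [ji pj]] /eqP hp] ->.
exists j; split => //; rewrite -hp subKr //.
Qed.

Theorem proposition3p13 (V : finZmodType) (n : nat) (A : 'I_n.+1 -> {set V})
  (Hdisj : forall i j : 'I_n.+1, i != j -> [disjoint A i & A j])
  (Hne : forall i : 'I_n.+1, A i != set0)
  (Hbim : bimodal A)
  (H1 : (#|A ord0| < #|diff_group (A ord0)|)%N)
  (Hi : forall i : 'I_n.+1, i != ord0 -> #|A i| = #|diff_group (A i)|) :
  (forall i : 'I_n.+1, i != ord0 ->
     is_coset_of (A i) (diff_group (A i)) /\
     diff_group (A i) \subset diff_group (A ord0)) /\
  ((exists x : V, A ord0 \proper add_coset x (diff_group (A ord0))) /\
   union_of_cosets (A ord0)
     <<\bigcup_(i : 'I_n.+1 | i != ord0) diff_group (A i)>>%g).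
Proof.
have same := @same_idx _ _ A Hdisj.
have keyA := @key _ _ A Hbim.
have cos : forall i, i != ord0 -> forall a, a \in A i ->
    A i = add_coset a (diff_group (A i)).
  by move=> i i0 a aA; apply: coset_eq => //; apply: Hi.
have inv : forall i, i != ord0 -> forall h, h \in diff_group (A i) ->
    forall u j, u \in A j -> exists k, u + h \in A k.
  move=> i i0 h hH u j uj.
  case: (eqVneq j i) => [ji | ji].
    subst j; exists i; rewrite (cos i i0 u uj); exact: add_coset_mem.
  have [a ai] := set0Pn _ (Hne i).
  have dn0 : a - u != 0.
    rewrite subr_eq0; apply/negP => /eqP e; subst u.
    by move: ji; rewrite (same _ _ _ uj ai) eqxx.
  have := keyA i (a - u) dn0 _ (a + h).
  case.
  - by exists a, j; rewrite subKr.
  - by rewrite (cos i i0 a ai); apply: add_coset_mem.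
  by move=> k [_ hk]; exists k; move: hk; rewrite opprB addrC addrA subrK addrC.
have stab : forall i, i != ord0 -> forall h, h \in diff_group (A i) ->
    forall x, x \in A ord0 -> x + h \in A ord0.
  move=> i i0 h hH x x0.
  case: (boolP (x + h \in A ord0)) => // xh0.
  exfalso.
  have [k xhk] := inv i i0 h hH x ord0 x0.
  have k0 : k != ord0 by apply/eqP => e; subst k; rewrite xhk in xh0.
  have hn0 : - h != 0.
    rewrite oppr_eq0; apply/eqP => e; subst h; by rewrite addr0 x0 in xh0.
  have B1 := keyA ord0 (- h) hn0.
  have {}B1 : forall a, a \in A ord0 -> exists j, j != ord0 /\ a + h \in A j.
    move=> a a0; case: (B1 _ a a0).
    - by exists x, k; rewrite opprK k0.
    by move=> j; rewrite opprK => hj; exists j.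
  have hHm : - h \in diff_group (A i) by by move: hH; rewrite -(@groupV _ [group of diff_group (A i)] h) zmodVgE.
  have all : forall y z a, y \in A ord0 -> z \in A ord0 -> a \in A ord0 ->
      a + (y - z) \in A ord0.
    move=> y z a y0 z0 a0.
    have [k1 [k10 yh]] := B1 y y0.
    have dn : - (y - z + h) != 0.
      rewrite oppr_eq0; apply/eqP => e.
      have : y + h = z by apply/eqP; rewrite -subr_eq0 -e; apply/eqP; rewrite addrAC. 
      move=> e2; rewrite e2 in yh.
      by move: k10; rewrite (same _ _ _ yh z0) eqxx.
    have [k2 [k20 hk2]] : exists j, j != ord0 /\ a - - (y - z + h) \in A j.
      apply: (keyA ord0 _ dn) a0.
      exists z, k1; rewrite k10 z0 opprK; split => //.
      by rewrite addrA [z + _]addrC subrK.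
    have [k3 hk3] := inv i i0 (- h) hHm _ _ hk2.
    have e3 : a - - (y - z + h) + - h = a + (y - z) by rewrite opprK addrA addrK.
    rewrite e3 in hk3.
    case: (eqVneq k3 ord0) => [ke | kne]; first by subst k3.
    exfalso.
    have dn2 : - (y - z) != 0.
      rewrite oppr_eq0; apply/eqP => e; rewrite e addr0 in hk3.
      by move: kne; rewrite (same _ _ _ hk3 a0) eqxx.
    have [k4 [k40 hk4]] : exists j, j != ord0 /\ z - - (y - z) \in A j.
      apply: (keyA ord0 _ dn2) z0.
      by exists a, k3; rewrite opprK kne a0 hk3.
    rewrite opprK addrC subrK in hk4.
    by move: k40; rewrite (same _ _ _ hk4 y0) eqxx.
  have [z z0] := set0Pn _ (Hne ord0).
  have sub : add_coset z (diff_group (A ord0)) \subset A ord0.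
    apply/subsetP => v /imsetP [d dH ->].
    apply: (@gen_stab _ (A ord0) ([set x - y | x in A ord0, y in A ord0])) => //.
    move=> s /imset2P [y w y0 w0 ->] a a0; exact: all.
  by move: (subset_leq_card sub); rewrite card_add_coset leqNgt H1.
have [z z0] := set0Pn _ (Hne ord0).
split.
  move=> i i0; split.
    have [a ai] := set0Pn _ (Hne i).
    by exists a; apply: cos.
  apply/subsetP => h hH.
  have := stab i i0 h hH z z0 => zh.
  have -> : h = (z + h) - z by rewrite addrC addKr.
  exact: diff_mem.
split.
  exists z; rewrite properEcard coset_sub //= card_add_coset //.
set D := <<_>>%g.
exists (A ord0); apply/eqP; rewrite eqEsubset; apply/andP; split.
  apply/subsetP => x x0; apply/bigcupP; exists x => //.
  rewrite -{1}[x]addr0; apply: (@add_coset_mem V x D 0).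
  exact: (group1 [group of D]).
apply/subsetP => v /bigcupP [x x0 /imsetP [d dD ->]].
apply: (@gen_stab _ (A ord0) (\bigcup_(i : 'I_n.+1 | i != ord0) diff_group (A i))) => //.
move=> s /bigcupP [i i0 sH] a a0; exact: stab i i0 s sH a a0.
Qed.
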